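(* Consider the family $Z\in\mathfrak X_S$ of the setup under the resonance condition $A=-2C$, i.e. the real eigenvalue of $DX$ equals minus twice the real part of its complex eigenvalues. Then there exist parameter values $(C,H,\Lambda)$ for which $Z$ admits at least one symmetric limit cycle. Here a symmetric limit cycle is an isolated crossing periodic orbit $\gamma$ with $S(\gamma)=\gamma$.
   Context: Setup. Fix real parameters $A\neq 0$, $C$, $H$, $\Lambda$. Let $\Sigma=\{z=0\}$, $\Sigma^+=\{z\ge0\}$ and $\Sigma^-=\{z<0\}$. Define $$X(x,y,z)=\big(Ax-H(((A-C)^2+1)z-\Lambda),\ \Lambda-(1+C^2)z,\ y+2Cz\big),$$ $$Y(x,y,z)=\big(-\Lambda-(1+C^2)z,\ Ay-H(((A-C)^2+1)z+\Lambda),\ x+2Cz\big).$$ $Z$ equals $X$ on $\Sigma^+$ and $Y$ on $\Sigma^-$; this family is denoted $\mathfrak X_S$. The matrices $DX$ and $DY$ have eigenvalues $A$ and $C\pm i$. The involution is $S(x,y,z)=(-y,-x,-z)$. A crossing periodic orbit is a periodic orbit of $Z$ made of an arc of $X$ in $\Sigma^+$ from $p_0\in\Sigma$ to $p_1\in\Sigma$, followed by an arc of $Y$ in $\Sigma^-$ from $p_1$ back to $p_0$. Both crossings are transversal, i.e. $X_3Y_3>0$ at $p_0$ and at $p_1$, where $X_3(x,y,0)=y$ and $Y_3(x,y,0)=x$. *)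

(* Defs.v *)
From Stdlib Require Import Reals.
Open Scope R_scope.

Definition pt := (R * R * R)%type.
Definition px (p : pt) : R := fst (fst p).
Definition py (p : pt) : R := snd (fst p).
Definition pz (p : pt) : R := snd p.

Definition Xf (A C H L : R) (p : pt) : pt :=
  let '(x, y, z) := p in
  (A * x - H * (((A - C) ^ 2 + 1) * z - L), L - (1 + C ^ 2) * z, y + 2 * C * z).

Definition Yf (A C H L : R) (p : pt) : pt :=
  let '(x, y, z) := p in
  (- L - (1 + C ^ 2) * z, A * y - H * (((A - C) ^ 2 + 1) * z + L), x + 2 * C * z).

Definition Sinv (p : pt) : pt := let '(x, y, z) := p in (- y, - x, - z).

Definition dist3 (p q : pt) : R :=
  sqrt ((px p - px q) ^ 2 + (py p - py q) ^ 2 + (pz p - pz q) ^ 2).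

Definition is_traj (V : pt -> pt) (u : R -> pt) : Prop :=
  forall t,
    derivable_pt_lim (fun s => px (u s)) t (px (V (u t))) /\
    derivable_pt_lim (fun s => py (u s)) t (py (V (u t))) /\
    derivable_pt_lim (fun s => pz (u s)) t (pz (V (u t))).

(* g (a subset of R^3) is a crossing periodic orbit of Z = (X on z>=0, Y on z<0):
   an arc of X in Sigma^+ from p0 to p1 (interior in z>0), followed by an arc of
   Y in Sigma^- from p1 back to p0 (interior in z<0), both crossings transversal
   (X3*Y3 > 0 at p0 and p1); g is the union of the two arcs. *)
Definition crossing_periodic_orbit (A C H L : R) (g : pt -> Prop) : Prop :=
  exists (p0 p1 : pt) (T1 T2 : R) (u v : R -> pt),
    0 < T1 /\ 0 < T2 /\
    is_traj (Xf A C H L) u /\ is_traj (Yf A C H L) v /\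
    u 0 = p0 /\ u T1 = p1 /\ v 0 = p1 /\ v T2 = p0 /\
    pz p0 = 0 /\ pz p1 = 0 /\
    (forall t, 0 < t < T1 -> 0 < pz (u t)) /\
    (forall t, 0 < t < T2 -> pz (v t) < 0) /\
    0 < pz (Xf A C H L p0) * pz (Yf A C H L p0) /\
    0 < pz (Xf A C H L p1) * pz (Yf A C H L p1) /\
    (forall q, g q <->
       ((exists t, 0 <= t <= T1 /\ q = u t) \/ (exists t, 0 <= t <= T2 /\ q = v t))).

(* Limit cycle: an isolated crossing periodic orbit, i.e. some neighbourhood of g
   contains no other crossing periodic orbit. *)
Definition limit_cycle (A C H L : R) (g : pt -> Prop) : Prop :=
  crossing_periodic_orbit A C H L g /\
  exists eps, 0 < eps /\
    forall g', crossing_periodic_orbit A C H L g' ->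
      (forall q, g' q -> exists p, g p /\ dist3 p q < eps) ->
      forall q, g' q <-> g q.

Definition symmetric_limit_cycle (A C H L : R) (g : pt -> Prop) : Prop :=
  limit_cycle A C H L g /\ (forall p, g p <-> g (Sinv p)).

(* Main.v *)
Require Import Defs.
From Stdlib Require Import Reals Lra.
From Coquelicot Require Import Coquelicot.
Open Scope R_scope.


Lemma strict_incr (f f' : R -> R) a b : a < b ->
  (forall x, a <= x <= b -> derivable_pt_lim f x (f' x)) ->
  (forall x, a < x < b -> 0 < f' x) -> f a < f b.
Proof.
  intros Hab Hd Hp. destruct (MVT_cor2 f f' a b Hab Hd) as [c [Hc Hc2]].
  assert (0 < f' c * (b - a)) by (apply Rmult_lt_0_compat; [apply Hp; lra| lra]).
  lra.
Qed.

Ltac dtac := apply is_derive_Reals; auto_derive; [try tauto | try field].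

Lemma sin_pos T : 0 < T < PI -> 0 < sin T.
Proof. intros; apply sin_gt_0; lra. Qed.

Lemma cos_lt1 T : 0 < T < PI -> cos T < 1.
Proof.
  intros H. pose proof (sin_pos T H). pose proof (sin2_cos2 T). pose proof (COS_bound T).
  unfold Rsqr in *. destruct (Req_dec (cos T) 1); [|lra]. nra.
Qed.

Lemma A2 T : 0 < T < PI -> exp (-T) * (cos T + sin T) < 1.
Proof.
  intros H.
  assert (- (exp (-0) * (cos 0 + sin 0)) < - (exp (-T) * (cos T + sin T))).
  { apply (strict_incr (fun x => - (exp (-x) * (cos x + sin x))) (fun x => 2 * exp (-x) * sin x) 0 T). lra.
    intros x _. dtac.
    intros x Hx. pose proof (sin_pos x ltac:(lra)). pose proof (exp_pos (-x)). repeat apply Rmult_lt_0_compat; lra. }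
  rewrite Ropp_0, exp_0, cos_0, sin_0 in H0. lra.
Qed.

Lemma A3 T : 0 < T < PI -> exp T * (cos T - sin T) < 1.
Proof.
  intros H.
  assert (- (exp 0 * (cos 0 - sin 0)) < - (exp T * (cos T - sin T))).
  { apply (strict_incr (fun x => - (exp x * (cos x - sin x))) (fun x => 2 * exp x * sin x) 0 T). lra.
    intros x _. dtac.
    intros x Hx. pose proof (sin_pos x ltac:(lra)). pose proof (exp_pos x). repeat apply Rmult_lt_0_compat; lra. }
  rewrite exp_0, cos_0, sin_0 in H0. lra.
Qed.

Lemma A4 T : 0 < T < PI -> 0 < exp T * (sin T - cos T) + 1.
Proof.
  intros H.
  assert (exp 0 * (sin 0 - cos 0) + 1 < exp T * (sin T - cos T) + 1).
  { apply (strict_incr (fun x => exp x * (sin x - cos x) + 1) (fun x => 2 * exp x * sin x) 0 T). lra.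
    intros x _. dtac.
    intros x Hx. pose proof (sin_pos x ltac:(lra)). pose proof (exp_pos x). repeat apply Rmult_lt_0_compat; lra. }
  rewrite exp_0, cos_0, sin_0 in H0. lra.
Qed.


Definition sh x := (exp x - exp (-x)) / 2.
Definition ch x := (exp x + exp (-x)) / 2.

Lemma ch2_sh2 x : ch x * ch x - sh x * sh x = 1.
Proof. unfold ch, sh. rewrite exp_Ropp. pose proof (exp_pos x). field. lra. Qed.

Lemma exp_gt1 x : 0 < x -> 1 < exp x.
Proof. intros. rewrite <- exp_0. apply exp_increasing. lra. Qed.

Lemma ch_gt1 x : 0 < x -> 1 < ch x.
Proof.
  intros H. pose proof (exp_gt1 x H). unfold ch. rewrite exp_Ropp.
  assert (exp x + / exp x - 2 = (exp x - 1)^2 / exp x) by (field; lra).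
  assert (0 < (exp x - 1)^2 / exp x) by (apply Rdiv_lt_0_compat; nra). lra.
Qed.

Lemma sh_pos x : 0 < x -> 0 < sh x.
Proof.
  intros H. pose proof (exp_gt1 x H). unfold sh. rewrite exp_Ropp.
  assert (/ exp x < 1). { rewrite <- Rinv_1. apply Rinv_lt_contravar; lra. } lra.
Qed.

Definition uu x := sh x - sin x.
Definition ww x := ch x - cos x.

Lemma ww_pos x : 0 < x -> 0 < ww x.
Proof. intros. unfold ww. pose proof (ch_gt1 x H). pose proof (COS_bound x). lra. Qed.

Lemma uu_pos T : 0 < T < PI -> 0 < uu T.
Proof.
  intros H.
  assert (uu 0 < uu T).
  { apply (strict_incr uu ww 0 T). lra.
    intros x _. unfold uu, ww, sh, ch. dtac.
    intros x Hx. apply ww_pos; lra. }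
  assert (uu 0 = 0) by (unfold uu, sh; rewrite Ropp_0, exp_0, sin_0; field). lra.
Qed.

Lemma JJ T : 0 < T < PI -> 0 < sin T * ch T - cos T * sh T.
Proof.
  intros H.
  assert (sin 0 * ch 0 - cos 0 * sh 0 < sin T * ch T - cos T * sh T).
  { apply (strict_incr (fun x => sin x * ch x - cos x * sh x) (fun x => 2 * sin x * sh x) 0 T). lra.
    intros x _. unfold sh, ch. apply is_derive_Reals; auto_derive. tauto. field. 
    intros x Hx. pose proof (sin_pos x ltac:(lra)). pose proof (sh_pos x ltac:(lra)).
    apply Rmult_lt_0_compat; [apply Rmult_lt_0_compat|]; lra. }
  assert (sin 0 * ch 0 - cos 0 * sh 0 = 0) by (unfold sh; rewrite Ropp_0, exp_0, sin_0; field). lra.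
Qed.

Lemma A10 T : 0 < T < PI -> cos T * ch T < 1.
Proof.
  intros H.
  assert (- (cos 0 * ch 0) < - (cos T * ch T)).
  { apply (strict_incr (fun x => - (cos x * ch x)) (fun x => sin x * ch x - cos x * sh x) 0 T). lra.
    intros x _. unfold sh, ch. dtac.
    intros x Hx. apply JJ; lra. }
  assert (cos 0 * ch 0 = 1) by (unfold ch; rewrite Ropp_0, exp_0, cos_0; field). lra.
Qed.

Lemma kappa_incr a b : 0 < a -> a < b -> b < PI -> uu a / ww a < uu b / ww b.
Proof.
  intros Ha Hab Hb.
  apply (strict_incr (fun x => uu x / ww x) (fun x => (ww x * ww x - uu x * (sh x + sin x)) / (ww x)^2) a b Hab).
  - intros x Hx. pose proof (ww_pos x ltac:(lra)). unfold uu, ww, sh, ch in *.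
    apply is_derive_Reals. auto_derive. lra. field. lra.
  - intros x Hx. pose proof (ww_pos x ltac:(lra)).
    apply Rdiv_lt_0_compat; [|nra].
    assert (ww x * ww x - uu x * (sh x + sin x) = 2 * (1 - cos x * ch x)).
    { unfold ww, uu. pose proof (ch2_sh2 x). pose proof (sin2_cos2 x). unfold Rsqr in *. nra. }
    pose proof (A10 x ltac:(lra)). lra.
Qed.

Definition th x := sh x / ch x.

Lemma th_incr a b : 0 <= a -> a < b -> th a < th b.
Proof.
  intros Ha Hab.
  apply (strict_incr th (fun x => 1 / (ch x)^2) a b Hab).
  - intros x Hx. assert (0 < ch x). { unfold ch. pose proof (exp_pos x). pose proof (exp_pos (-x)). lra. }
    pose proof (ch2_sh2 x). unfold th. unfold sh, ch in *.
    apply is_derive_Reals. auto_derive. lra.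
    rewrite !exp_Ropp in *. pose proof (exp_pos x). field. split; nra.
  - intros x Hx. assert (0 < ch x) by (apply (Rlt_trans _ 1); [lra| apply ch_gt1; lra]).
    apply Rdiv_lt_0_compat; nra.
Qed.


Definition pf T := 1 + (exp (-T) - cos T) / sin T.
Definition nf T := -1 + (exp T - cos T) / sin T.
Definition Ef T := exp (-2 * T).

Lemma expm T : exp (-T) = / exp T.
Proof. apply exp_Ropp. Qed.
Lemma expm2 T : exp (-2 * T) = / exp T * / exp T.
Proof. replace (-2 * T) with (-T + -T) by ring. rewrite exp_plus, exp_Ropp. ring. Qed.

Lemma pf_incr a b : 0 < a -> a < b -> b < PI -> pf a < pf b.
Proof.
  intros Ha Hab Hb.
  apply (strict_incr pf (fun x => ((- exp (-x) + sin x) * sin x - (exp (-x) - cos x) * cos x) / (sin x)^2) a b Hab).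
  - intros x Hx. pose proof (sin_pos x ltac:(lra)). unfold pf.
    apply is_derive_Reals. auto_derive. lra. field. lra.
  - intros x Hx. pose proof (sin_pos x ltac:(lra)). pose proof (A2 x ltac:(lra)).
    pose proof (sin2_cos2 x). unfold Rsqr in *.
    apply Rdiv_lt_0_compat; nra.
Qed.

Lemma nf_incr a b : 0 < a -> a < b -> b < PI -> nf a < nf b.
Proof.
  intros Ha Hab Hb.
  apply (strict_incr nf (fun x => ((exp x + sin x) * sin x - (exp x - cos x) * cos x) / (sin x)^2) a b Hab).
  - intros x Hx. pose proof (sin_pos x ltac:(lra)). unfold nf.
    apply is_derive_Reals. auto_derive. lra. field. lra.
  - intros x Hx. pose proof (sin_pos x ltac:(lra)). pose proof (A3 x ltac:(lra)).
    pose proof (sin2_cos2 x). unfold Rsqr in *.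
    apply Rdiv_lt_0_compat; nra.
Qed.

Lemma pf_pos T : 0 < T < PI -> 0 < pf T.
Proof.
  intros H. pose proof (sin_pos T H). pose proof (A4 T H). pose proof (exp_pos T).
  unfold pf. rewrite expm.
  assert (1 + (/ exp T - cos T) / sin T = (exp T * (sin T - cos T) + 1) / (exp T * sin T)) by (field; lra).
  rewrite H3. apply Rdiv_lt_0_compat; nra.
Qed.

Lemma nf_pos T : 0 < T < PI -> 0 < nf T.
Proof.
  intros H. pose proof (sin_pos T H). pose proof (A2 T H). pose proof (exp_pos T).
  unfold nf. rewrite expm in H1.
  assert (-1 + (exp T - cos T) / sin T = exp T * (1 - / exp T * (cos T + sin T)) / sin T) by (field; lra).
  rewrite H3. apply Rdiv_lt_0_compat; [|lra]. apply Rmult_lt_0_compat; lra.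
Qed.

Lemma nf_gt_pf T : 0 < T < PI -> pf T < nf T.
Proof.
  intros H. pose proof (sin_pos T H). pose proof (uu_pos T H).
  assert (nf T - pf T = 2 * uu T / sin T).
  { unfold nf, pf, uu, sh. field. lra. }
  assert (0 < 2 * uu T / sin T) by (apply Rdiv_lt_0_compat; lra). lra.
Qed.

Lemma Ef_pos T : 0 < Ef T.
Proof. apply exp_pos. Qed.
Lemma Ef_decr a b : a < b -> Ef b < Ef a.
Proof. intros. unfold Ef. apply exp_increasing. lra. Qed.

Definition T0 := PI / 2.
Definition H0 := (pf T0 + Ef T0 * nf T0) / (nf T0 + Ef T0 * pf T0).
Definition FF a b := pf a + Ef b * nf a - H0 * (nf b + Ef b * pf b).

Lemma T0_in : 0 < T0 < PI.
Proof. unfold T0. pose proof PI_RGT_0. lra. Qed.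

Lemma H0_bounds : 0 < H0 < 1.
Proof.
  pose proof (pf_pos T0 T0_in). pose proof (nf_pos T0 T0_in). pose proof (nf_gt_pf T0 T0_in).
  pose proof (Ef_pos T0). assert (Ef T0 < 1).
  { unfold Ef. rewrite <- exp_0. apply exp_increasing. pose proof T0_in. lra. }
  unfold H0. split.
  - apply Rdiv_lt_0_compat; nra.
  - apply (Rmult_lt_reg_r (nf T0 + Ef T0 * pf T0)). nra.
    unfold Rdiv. rewrite Rmult_assoc, Rinv_l by nra. nra.
Qed.

Lemma FF_diff a b : 0 < a -> a < b -> b < PI -> FF a b < FF b a.
Proof.
  intros Ha Hab Hb.
  pose proof (pf_incr a b Ha Hab Hb). pose proof (nf_incr a b Ha Hab Hb).
  pose proof (Ef_decr a b Hab). pose proof (Ef_pos a). pose proof (Ef_pos b).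
  pose proof (pf_pos a ltac:(lra)). pose proof (nf_gt_pf a ltac:(lra)). pose proof H0_bounds.
  assert (FF b a - FF a b = (pf b - pf a) * (1 + H0 * Ef b) + (nf b - nf a) * (Ef a + H0)
            + (Ef a - Ef b) * (nf a - H0 * pf a)) by (unfold FF; ring).
  assert (0 < H0 * Ef b) by (apply Rmult_lt_0_compat; lra).
  assert (H0 * pf a < pf a) by nra.
  assert (0 < (pf b - pf a) * (1 + H0 * Ef b)) by (apply Rmult_lt_0_compat; lra).
  assert (0 < (nf b - nf a) * (Ef a + H0)) by (apply Rmult_lt_0_compat; lra).
  assert (0 < (Ef a - Ef b) * (nf a - H0 * pf a)) by (apply Rmult_lt_0_compat; lra).
  lra.
Qed.

Definition Om T := th T * (uu T / ww T).

Lemma FF_diag T : 0 < T < PI ->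
  FF T T = 2 / (sin T * exp T) * ((ch T * ww T - sh T * uu T) - H0 * (ch T * ww T + sh T * uu T)).
Proof.
  intros H. pose proof (sin_pos T H). pose proof (exp_pos T).
  unfold FF, pf, nf, Ef, ww, uu, sh, ch. rewrite expm2, !expm. field. lra.
Qed.

Lemma Om_incr a b : 0 < a -> a < b -> b < PI -> Om a < Om b.
Proof.
  intros Ha Hab Hb. unfold Om.
  pose proof (th_incr a b ltac:(lra) Hab). pose proof (th_incr 0 a ltac:(lra) Ha).
  assert (th 0 = 0) by (unfold th, sh, ch; rewrite Ropp_0, exp_0; field).
  pose proof (kappa_incr a b Ha Hab Hb).
  assert (0 < uu a / ww a) by (apply Rdiv_lt_0_compat; [apply uu_pos | apply ww_pos]; lra).
  nra.
Qed.

Lemma FF_diag_Om T : 0 < T < PI -> FF T T = 0 -> Om T = (1 - H0) / (1 + H0).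
Proof.
  intros H HF. rewrite FF_diag in HF by exact H.
  pose proof (sin_pos T H). pose proof (exp_pos T). pose proof H0_bounds.
  assert (Hc : 0 < ch T) by (apply (Rlt_trans _ 1); [lra| apply ch_gt1; lra]).
  pose proof (ww_pos T ltac:(lra)).
  assert (E : (ch T * ww T - sh T * uu T) - H0 * (ch T * ww T + sh T * uu T) = 0).
  { assert (2 / (sin T * exp T) <> 0).
    { apply Rgt_not_eq. apply Rdiv_lt_0_compat; nra. }
    apply Rmult_integral in HF. destruct HF; [contradiction|assumption]. }
  unfold Om, th. field_simplify_eq. lra. repeat split; lra.
Qed.

Lemma FF_T0 : FF T0 T0 = 0.
Proof.
  pose proof (pf_pos T0 T0_in). pose proof (nf_pos T0 T0_in). pose proof (Ef_pos T0).
  unfold FF, H0. field. nra.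
Qed.

Lemma FF_unique a b : 0 < a < PI -> 0 < b < PI -> FF a b = 0 -> FF b a = 0 -> a = T0 /\ b = T0.
Proof.
  intros Ha Hb H1 H2.
  assert (a = b).
  { destruct (Rtotal_order a b) as [Hl|[He|Hg]]; auto.
    - pose proof (FF_diff a b ltac:(lra) Hl ltac:(lra)). lra.
    - pose proof (FF_diff b a ltac:(lra) Hg ltac:(lra)). lra. }
  subst b.
  pose proof (FF_diag_Om a Ha H1). pose proof (FF_diag_Om T0 T0_in FF_T0).
  pose proof T0_in.
  destruct (Rtotal_order a T0) as [Hl|[He|Hg]]; auto.
  - pose proof (Om_incr a T0 ltac:(lra) Hl ltac:(lra)). lra.
  - pose proof (Om_incr T0 a ltac:(lra) Hg ltac:(lra)). lra.
Qed.


Definition XX := Xf (-2 * 1) 1 H0 (-2).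
Definition YY := Yf (-2 * 1) 1 H0 (-2).

Lemma XX_px p : px (XX p) = -2 * px p - H0 * (10 * pz p + 2).
Proof. destruct p as [[x y] z]. unfold XX, Xf, px, pz. simpl. ring. Qed.
Lemma XX_py p : py (XX p) = -2 - 2 * pz p.
Proof. destruct p as [[x y] z]. unfold XX, Xf, py, pz. simpl. ring. Qed.
Lemma XX_pz p : pz (XX p) = py p + 2 * pz p.
Proof. destruct p as [[x y] z]. unfold XX, Xf, py, pz. simpl. ring. Qed.

Lemma const_fun (f : R -> R) : (forall t, derivable_pt_lim f t 0) -> forall t, 0 <= t -> f t = f 0.
Proof.
  intros Hd t Ht. destruct (Req_dec t 0) as [->|Hn]; auto.
  destruct (MVT_cor2 f (fun _ => 0) 0 t ltac:(lra) (fun c _ => Hd c)) as [c [Hc _]]. lra.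
Qed.


Ltac sides fx fy fz Hx Hy Hz := repeat split; repeat match goal with
 | |- ex_derive (fun x => fz x) ?t => exact (ex_intro _ _ (Hz t))
 | |- ex_derive (fun x => fy x) ?t => exact (ex_intro _ _ (Hy t))
 | |- ex_derive (fun x => fx x) ?t => exact (ex_intro _ _ (Hx t)) end.
Ltac rwD fx fy fz Hx Hy Hz t := 
  try replace (Derive (fun x => fz x) t) with (fy t + 2 * fz t) by (symmetry; apply is_derive_unique; apply Hz);
  try replace (Derive (fun x => fy x) t) with (-2 - 2 * fz t) by (symmetry; apply is_derive_unique; apply Hy);
  try replace (Derive (fun x => fx x) t) with (-2 * fx t - H0 * (10 * fz t + 2)) by (symmetry; apply is_derive_unique; apply Hx).

Lemma inv_al (fx fy fz : R -> R) (Hx : forall t, is_derive fx t (-2 * fx t - H0 * (10 * fz t + 2))) (Hy : forall t, is_derive fy t (-2 - 2 * fz t)) (Hz : forall t, is_derive fz t (fy t + 2 * fz t)) t : derivable_pt_lim (fun t => exp (-t) * ((fz t + 1) * (cos t - sin t) - (fy t - 2) * sin t)) t 0.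
Proof. apply is_derive_Reals. auto_derive. sides fx fy fz Hx Hy Hz. rwD fx fy fz Hx Hy Hz t. ring. Qed.

Lemma inv_be (fx fy fz : R -> R) (Hx : forall t, is_derive fx t (-2 * fx t - H0 * (10 * fz t + 2))) (Hy : forall t, is_derive fy t (-2 - 2 * fz t)) (Hz : forall t, is_derive fz t (fy t + 2 * fz t)) t : derivable_pt_lim (fun t => exp (-t) * ((fz t + 1) * (cos t + sin t) + (fy t - 2) * cos t)) t 0.
Proof. apply is_derive_Reals. auto_derive. sides fx fy fz Hx Hy Hz. rwD fx fy fz Hx Hy Hz t. ring. Qed.

Lemma inv_ga (fx fy fz : R -> R) (Hx : forall t, is_derive fx t (-2 * fx t - H0 * (10 * fz t + 2))) (Hy : forall t, is_derive fy t (-2 - 2 * fz t)) (Hz : forall t, is_derive fz t (fy t + 2 * fz t)) t : derivable_pt_lim (fun t => exp (2 * t) * (fx t - H0 * (fy t - 2 * fz t))) t 0.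
Proof. apply is_derive_Reals. auto_derive. sides fx fy fz Hx Hy Hz. rwD fx fy fz Hx Hy Hz t. ring. Qed.

Lemma sol (fx fy fz : R -> R) (Hx : forall t, is_derive fx t (-2 * fx t - H0 * (10 * fz t + 2))) (Hy : forall t, is_derive fy t (-2 - 2 * fz t)) (Hz : forall t, is_derive fz t (fy t + 2 * fz t)) t : 0 <= t -> fz 0 = 0 ->
  fz t = -1 + exp t * (cos t + (fy 0 - 1) * sin t) /\
  fy t = 2 + exp t * ((fy 0 - 2) * cos t - fy 0 * sin t) /\
  fx t = H0 * (fy t - 2 * fz t) + (fx 0 - H0 * fy 0) * exp (-2 * t).
Proof.
  intros Ht H0z.
  pose proof (const_fun _ (inv_al fx fy fz Hx Hy Hz) t Ht) as Ha. pose proof (const_fun _ (inv_be fx fy fz Hx Hy Hz) t Ht) as Hb.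
  pose proof (const_fun _ (inv_ga fx fy fz Hx Hy Hz) t Ht) as Hg. simpl in Ha, Hb, Hg.
  rewrite H0z, Ropp_0, exp_0, cos_0, sin_0 in Ha, Hb.
  replace (2 * 0) with 0 in Hg by ring. rewrite exp_0 in Hg.
  rewrite expm in Ha, Hb. pose proof (exp_pos t) as Hep. pose proof (sin2_cos2 t) as Hsc. unfold Rsqr in *.
  assert (Ha' : (fz t + 1) * (cos t - sin t) - (fy t - 2) * sin t = exp t).
  { apply (Rmult_eq_reg_l (/ exp t)). rewrite Ha. field. lra. apply Rgt_not_eq, Rinv_0_lt_compat; lra. }
  assert (Hb' : (fz t + 1) * (cos t + sin t) + (fy t - 2) * cos t = (fy 0 - 1) * exp t).
  { apply (Rmult_eq_reg_l (/ exp t)). rewrite Hb. field. lra. apply Rgt_not_eq, Rinv_0_lt_compat; lra. }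
  assert (Z : fz t = -1 + exp t * (cos t + (fy 0 - 1) * sin t)).
  { assert (Heq : fz t + 1 = cos t * ((fz t + 1) * (cos t - sin t) - (fy t - 2) * sin t)
                     + sin t * ((fz t + 1) * (cos t + sin t) + (fy t - 2) * cos t)).
    { transitivity ((fz t + 1) * (sin t * sin t + cos t * cos t)). rewrite Hsc; ring. ring. }
    rewrite Ha', Hb' in Heq. lra. }
  assert (Y : fy t = 2 + exp t * ((fy 0 - 2) * cos t - fy 0 * sin t)).
  { assert (Heq : fy t - 2 = (cos t - sin t) * ((fz t + 1) * (cos t + sin t) + (fy t - 2) * cos t)
                     - (cos t + sin t) * ((fz t + 1) * (cos t - sin t) - (fy t - 2) * sin t)).
    { transitivity ((fy t - 2) * (sin t * sin t + cos t * cos t)). rewrite Hsc; ring. ring. }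
    rewrite Ha', Hb' in Heq. lra. }
  split; [exact Z|split; [exact Y|]].
  rewrite expm2. rewrite H0z in Hg.
  replace (exp (2 * t)) with (exp t * exp t) in Hg by (rewrite <- exp_plus; f_equal; ring).
  assert (K: fx t - H0 * (fy t - 2 * fz t) = (fx 0 - H0 * (fy 0 - 2 * 0)) * (/ exp t * / exp t)).
  { apply (Rmult_eq_reg_l (exp t * exp t)); [| nra]. rewrite Hg. field. lra. }
  replace (fx 0 - H0 * fy 0) with (fx 0 - H0 * (fy 0 - 2 * 0)) by ring. rewrite <- K. ring.
Qed.


Lemma YY_px p : px (YY p) = 2 - 2 * pz p.
Proof. destruct p as [[x y] z]. unfold YY, Yf, px, pz. simpl. ring. Qed.
Lemma YY_py p : py (YY p) = -2 * py p - H0 * (10 * pz p - 2).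
Proof. destruct p as [[x y] z]. unfold YY, Yf, py, pz. simpl. ring. Qed.
Lemma YY_pz p : pz (YY p) = px p + 2 * pz p.
Proof. destruct p as [[x y] z]. unfold YY, Yf, px, pz. simpl. ring. Qed.

Lemma S_px p : px (Sinv p) = - py p.
Proof. destruct p as [[x y] z]. reflexivity. Qed.
Lemma S_py p : py (Sinv p) = - px p.
Proof. destruct p as [[x y] z]. reflexivity. Qed.
Lemma S_pz p : pz (Sinv p) = - pz p.
Proof. destruct p as [[x y] z]. reflexivity. Qed.
Lemma SS p : Sinv (Sinv p) = p.
Proof. destruct p as [[x y] z]. unfold Sinv. f_equal; [f_equal|]; ring. Qed.

Lemma dopp (f g : R -> R) t l : (forall s, g s = - f s) -> derivable_pt_lim f t l -> derivable_pt_lim g t (- l).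
Proof.
  intros Hg Hf. apply is_derive_Reals. apply (is_derive_ext (fun s => - f s)).
  intros; symmetry; apply Hg. apply is_derive_Reals. apply (derivable_pt_lim_opp f t l Hf).
Qed.

Lemma symYX v : is_traj YY v -> is_traj XX (fun t => Sinv (v t)).
Proof.
  intros Hv t. destruct (Hv t) as [Hx [Hy Hz]].
  split; [|split].
  - replace (px (XX (Sinv (v t)))) with (- py (YY (v t))).
    apply (dopp (fun s => py (v s))); [intros; apply S_px | exact Hy].
    rewrite XX_px, YY_py, S_pz, S_px. ring.
  - replace (py (XX (Sinv (v t)))) with (- px (YY (v t))).
    apply (dopp (fun s => px (v s))); [intros; apply S_py | exact Hx].
    rewrite XX_py, YY_px, S_pz. ring.
  - replace (pz (XX (Sinv (v t)))) with (- pz (YY (v t))).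
    apply (dopp (fun s => pz (v s))); [intros; apply S_pz | exact Hz].
    rewrite XX_pz, YY_pz, S_pz, S_py. ring.
Qed.

Lemma symXY v : is_traj XX v -> is_traj YY (fun t => Sinv (v t)).
Proof.
  intros Hv t. destruct (Hv t) as [Hx [Hy Hz]].
  split; [|split].
  - replace (px (YY (Sinv (v t)))) with (- py (XX (v t))).
    apply (dopp (fun s => py (v s))); [intros; apply S_px | exact Hy].
    rewrite XX_py, YY_px, S_pz. ring.
  - replace (py (YY (Sinv (v t)))) with (- px (XX (v t))).
    apply (dopp (fun s => px (v s))); [intros; apply S_py | exact Hx].
    rewrite XX_px, YY_py, S_pz, S_py. ring.
  - replace (pz (YY (Sinv (v t)))) with (- pz (XX (v t))).
    apply (dopp (fun s => pz (v s))); [intros; apply S_pz | exact Hz].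
    rewrite XX_pz, YY_pz, S_pz, S_px. ring.
Qed.

Lemma traj_sol u : is_traj XX u -> pz (u 0) = 0 -> forall t, 0 <= t ->
  pz (u t) = -1 + exp t * (cos t + (py (u 0) - 1) * sin t) /\
  py (u t) = 2 + exp t * ((py (u 0) - 2) * cos t - py (u 0) * sin t) /\
  px (u t) = H0 * (py (u t) - 2 * pz (u t)) + (px (u 0) - H0 * py (u 0)) * exp (-2 * t).
Proof.
  intros Hu Hz0 t Ht.
  apply (sol (fun s => px (u s)) (fun s => py (u s)) (fun s => pz (u s))); auto.
  - intros s. apply is_derive_Reals. rewrite <- XX_px. apply Hu.
  - intros s. apply is_derive_Reals. rewrite <- XX_py. apply Hu.
  - intros s. apply is_derive_Reals. rewrite <- XX_pz. apply Hu.
Qed.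


Lemma arc u T : is_traj XX u -> pz (u 0) = 0 -> 0 < T -> pz (u T) = 0 ->
  (forall t, 0 < t < T -> 0 < pz (u t)) ->
  T < PI /\ py (u 0) = pf T /\ py (u T) = - nf T /\
  px (u T) = - H0 * nf T + (px (u 0) - H0 * pf T) * Ef T.
Proof.
  intros Hu Hz0 HT HzT Hpos.
  assert (HPI : T < PI).
  { destruct (Rlt_le_dec T PI) as [h|h]; auto. exfalso.
    destruct (traj_sol u Hu Hz0 PI ltac:(pose proof PI_RGT_0; lra)) as [Z _].
    rewrite cos_PI, sin_PI in Z. pose proof (exp_pos PI).
    destruct (Req_dec T PI) as [->|hn].
    - lra.
    - assert (0 < pz (u PI)) by (apply Hpos; pose proof PI_RGT_0; lra). lra. }
  split; [exact HPI|].
  destruct (traj_sol u Hu Hz0 T ltac:(lra)) as [Z [Y X]].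
  pose proof (sin_pos T ltac:(lra)) as Hs. pose proof (exp_pos T) as He.
  pose proof (sin2_cos2 T) as Hsc. unfold Rsqr in Hsc.
  set (y0 := py (u 0)) in *.
  assert (K : y0 * sin T = sin T + / exp T - cos T).
  { assert (exp T * (cos T + (y0 - 1) * sin T) = 1) by lra.
    apply (Rmult_eq_reg_l (exp T)); [|lra].
    replace (exp T * (sin T + / exp T - cos T)) with (exp T * (sin T - cos T) + 1) by (field; lra).
    nra. }
  assert (Hy0 : y0 = pf T).
  { unfold pf. rewrite expm. apply (Rmult_eq_reg_r (sin T)); [|lra].
    rewrite K. field. lra. }
  split; [exact Hy0|].
  assert (Hy1 : py (u T) = - nf T).
  { rewrite Y. unfold nf. apply (Rmult_eq_reg_r (sin T)); [|lra].
    assert (E1 : (2 + exp T * ((y0 - 2) * cos T - y0 * sin T)) * sin T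
               = 2 * sin T + exp T * cos T * (y0 * sin T) - 2 * exp T * cos T * sin T - exp T * sin T * (y0 * sin T)) by ring.
    rewrite E1, K.
    assert (E2 : - (-1 + (exp T - cos T) / sin T) * sin T = sin T - exp T + cos T) by (field; lra).
    rewrite E2. field_simplify_eq; [|lra].
    assert (exp T * exp T * (cos T * cos T) = exp T * exp T - exp T * exp T * (sin T * sin T)) by nra.
    nra. }
  split; [exact Hy1|].
  rewrite X, HzT, Hy1, Hy0. unfold Ef. ring.
Qed.


Definition Z0 t := -1 + exp t * (cos t + (pf T0 - 1) * sin t).
Definition Y0 t := 2 + exp t * ((pf T0 - 2) * cos t - pf T0 * sin t).
Definition u0 (t : R) : pt := (H0 * (Y0 t - 2 * Z0 t) + (nf T0 - H0 * pf T0) * exp (-2 * t), Y0 t, Z0 t).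
Definition v0 t := Sinv (u0 t).
Definition g0 (q : pt) : Prop := (exists t, 0 <= t <= T0 /\ q = u0 t) \/ (exists t, 0 <= t <= T0 /\ q = v0 t).

Lemma pt_ext p q : px p = px q -> py p = py q -> pz p = pz q -> p = q.
Proof. destruct p as [[a b] c], q as [[d e] f]. unfold px, py, pz; simpl. intros -> -> ->. reflexivity. Qed.

Lemma u0_traj : is_traj XX u0.
Proof.
  intros t. rewrite XX_px, XX_py, XX_pz. unfold u0, px, py, pz, Y0, Z0; simpl.
  split; [|split]; apply is_derive_Reals; auto_derive; auto; ring.
Qed.

Lemma u0_0 : u0 0 = (nf T0, pf T0, 0).
Proof.
  apply pt_ext; unfold u0, px, py, pz, Y0, Z0; simpl;
  rewrite ?Rmult_0_r, exp_0, cos_0, sin_0; ring.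
Qed.

Lemma T0_vals : cos T0 = 0 /\ sin T0 = 1.
Proof. unfold T0. split; [apply cos_PI2 | apply sin_PI2]. Qed.

Lemma Z0_T0 : Z0 T0 = 0.
Proof.
  destruct T0_vals as [Hc Hs]. unfold Z0. rewrite Hc, Hs. unfold pf. rewrite Hc, Hs, expm.
  pose proof (exp_pos T0). field. lra.
Qed.

Lemma Y0_T0 : Y0 T0 = - nf T0.
Proof.
  destruct T0_vals as [Hc Hs]. unfold Y0, nf. rewrite Hc, Hs. unfold pf. rewrite Hc, Hs, expm.
  pose proof (exp_pos T0). field. lra.
Qed.

Lemma u0_T0 : u0 T0 = (- pf T0, - nf T0, 0).
Proof.
  pose proof FF_T0 as HF. unfold FF, Ef in HF.
  apply pt_ext; unfold u0, px, py, pz; simpl; rewrite ?Y0_T0, ?Z0_T0; try ring.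
  lra.
Qed.

Lemma Sinv_u0_0 : Sinv (u0 0) = u0 T0.
Proof. rewrite u0_0, u0_T0. apply pt_ext; unfold Sinv, px, py, pz; simpl; ring. Qed.
Lemma Sinv_u0_T0 : Sinv (u0 T0) = u0 0.
Proof. rewrite <- Sinv_u0_0. apply SS. Qed.

Lemma traj_eq u : is_traj XX u -> u 0 = u0 0 -> forall t, 0 <= t -> u t = u0 t.
Proof.
  intros Hu H0u t Ht.
  assert (Hz : pz (u 0) = 0) by (rewrite H0u, u0_0; reflexivity).
  assert (Hy : py (u 0) = pf T0) by (rewrite H0u, u0_0; reflexivity).
  assert (Hx : px (u 0) = nf T0) by (rewrite H0u, u0_0; reflexivity).
  destruct (traj_sol u Hu Hz t Ht) as [Z [Y X]].
  apply pt_ext; [rewrite X, Y, Z, Hy, Hx | rewrite Y, Hy | rewrite Z, Hy]; unfold u0, px, py, pz, Y0, Z0; simpl; ring.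
Qed.

Lemma Z0_pos t : 0 < t < T0 -> 0 < Z0 t.
Proof.
  intros Ht. pose proof T0_in. pose proof (pf_incr t T0 ltac:(lra) ltac:(lra) ltac:(lra)) as Hp.
  pose proof (sin_pos t ltac:(lra)). pose proof (exp_pos t).
  unfold pf at 1 in Hp. rewrite expm in Hp.
  assert (/ exp t - cos t < (pf T0 - 1) * sin t).
  { assert ((/ exp t - cos t) / sin t < pf T0 - 1) by lra.
    match goal with H : _ < pf T0 - 1 |- _ => rename H into Hq end.
    apply (Rmult_lt_compat_r (sin t)) in Hq; [|lra].
    unfold Rdiv in Hq. rewrite Rmult_assoc, Rinv_l in Hq by lra. lra. }
  unfold Z0.
  assert (HH : exp t * (/ exp t - cos t) < exp t * ((pf T0 - 1) * sin t)) by (apply Rmult_lt_compat_l; lra).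
  replace (exp t * (/ exp t - cos t)) with (1 - exp t * cos t) in HH by (field; lra).
  nra.
Qed.


Lemma g0_cpo : crossing_periodic_orbit (-2 * 1) 1 H0 (-2) g0.
Proof.
  pose proof T0_in as HT.
  exists (u0 0), (u0 T0), T0, T0, u0, v0.
  split; [lra|]. split; [lra|].
  split; [exact u0_traj|]. split; [exact (symXY u0 u0_traj)|].
  split; [reflexivity|]. split; [reflexivity|].
  split; [exact Sinv_u0_0|]. split; [exact Sinv_u0_T0|].
  split; [rewrite u0_0; reflexivity|]. split; [rewrite u0_T0; reflexivity|].
  split; [intros t Ht; unfold u0, pz; simpl; apply Z0_pos; lra|].
  split; [intros t Ht; unfold v0; rewrite S_pz; unfold u0, pz; simpl;
          pose proof (Z0_pos t Ht); lra|].
  pose proof (pf_pos T0 HT). pose proof (nf_pos T0 HT).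
  split.
  { change (0 < pz (XX (u0 0)) * pz (YY (u0 0))). rewrite XX_pz, YY_pz, u0_0.
    unfold px, py, pz; simpl. nra. }
  split.
  { change (0 < pz (XX (u0 T0)) * pz (YY (u0 T0))). rewrite XX_pz, YY_pz, u0_T0.
    unfold px, py, pz; simpl. nra. }
  intros q. unfold g0, v0. tauto.
Qed.

Lemma g0_sym p : g0 p <-> g0 (Sinv p).
Proof.
  unfold g0, v0. split.
  - intros [[t [Ht ->]]|[t [Ht ->]]].
    + right. exists t. auto.
    + left. exists t. rewrite SS. auto.
  - intros [[t [Ht E]]|[t [Ht E]]].
    + right. exists t. split; auto. rewrite <- E. symmetry. apply SS.
    + left. exists t. split; auto. rewrite <- (SS p), E. apply SS.
Qed.

Lemma g0_unique g : crossing_periodic_orbit (-2 * 1) 1 H0 (-2) g -> forall q, g q <-> g0 q.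
Proof.
  intros (p0 & p1 & T1 & T2 & u & v & HT1 & HT2 & Hu & Hv & Hu0 & HuT & Hv0 & HvT
          & Hz0 & Hz1 & Hpu & Hpv & Htr0 & Htr1 & Hg).
  change (is_traj XX u) in Hu. change (is_traj YY v) in Hv.
  pose proof (symYX v Hv) as HU.
  destruct (arc u T1 Hu ltac:(rewrite Hu0; exact Hz0) HT1 ltac:(rewrite HuT; exact Hz1) Hpu)
    as [A1 [A2 [A3 A4]]].
  destruct (arc (fun t => Sinv (v t)) T2 HU ltac:(cbv beta; rewrite Hv0, S_pz, Hz1; ring) HT2
              ltac:(cbv beta; rewrite HvT, S_pz, Hz0; ring)
              ltac:(intros t Ht; cbv beta; rewrite S_pz; pose proof (Hpv t Ht); lra))
    as [B1 [B2 [B3 B4]]].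
  simpl in B2, B3, B4.
  rewrite Hv0 in B2, B4. rewrite HvT in B3, B4.
  rewrite S_py in B2, B3. rewrite S_px in B4. rewrite S_px in B4.
  rewrite Hu0 in A2, A4. rewrite HuT in A3, A4.
  assert (F1 : FF T1 T2 = 0) by (unfold FF; rewrite <- A2; nra).
  assert (F2 : FF T2 T1 = 0) by (unfold FF; nra).
  destruct (FF_unique T1 T2 ltac:(lra) ltac:(lra) F1 F2) as [-> ->].
  assert (Hp0 : p0 = u0 0).
  { rewrite u0_0. apply pt_ext; cbn [px py pz fst snd]; lra. }
  assert (Eu : forall t, 0 <= t -> u t = u0 t) by (apply traj_eq; auto; congruence).
  assert (Hp1 : p1 = u0 T0) by (rewrite <- HuT; apply Eu; pose proof T0_in; lra).
  assert (EU : forall t, 0 <= t -> Sinv (v t) = u0 t).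
  { apply (traj_eq (fun t => Sinv (v t))); auto. simpl. rewrite Hv0, Hp1. apply Sinv_u0_T0. }
  assert (Ev : forall t, 0 <= t -> v t = v0 t).
  { intros t Ht. unfold v0. rewrite <- (EU t Ht). symmetry. apply SS. }
  intros q. rewrite Hg. unfold g0. split.
  - intros [[t [Ht E]]|[t [Ht E]]].
    + left. exists t. split; auto. rewrite E. apply Eu. lra.
    + right. exists t. split; auto. rewrite E. apply Ev. lra.
  - intros [[t [Ht E]]|[t [Ht E]]].
    + left. exists t. split; auto. rewrite E. symmetry. apply Eu. lra.
    + right. exists t. split; auto. rewrite E. symmetry. apply Ev. lra.
Qed.

Theorem theorem1 :
  exists C H L : R, (-2 * C) <> 0 /\
    exists g : pt -> Prop, symmetric_limit_cycle (-2 * C) C H L g.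
Proof.
  exists 1, H0, (-2). split; [lra|]. exists g0.
  split; [|exact g0_sym].
  split; [exact g0_cpo|].
  exists 1. split; [lra|]. intros g' Hg' _. apply g0_unique. exact Hg'.
Qed.
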